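(* Let $M_0$ be a primitive hyperbolic $2$-elementary sublattice of $L_{K3}$ and $\widetilde M_0=M_0\oplus\mathbb{Z}e\subset L_2$. Then $\Delta(M_0^{\perp_{L_{K3}}})=\Delta(\widetilde M_0^{\perp_{L_2}})$.
   Context: $L_{K3}=U^{\oplus3}\oplus E_8^{\oplus2}$ (even unimodular, $E_8$ negative definite), $L_2=L_{K3}\oplus\mathbb{Z}e$ with $e^2=-2$, $(e,L_{K3})=0$; note $\widetilde M_0^{\perp_{L_2}}=M_0^{\perp_{L_{K3}}}$. $\Delta(M_0^{\perp_{L_{K3}}})=\{d\in M_0^{\perp}: d^2=-2\}$ and $\Delta(\widetilde M_0^{\perp_{L_2}})=\{\delta\in\widetilde M_0^{\perp}:\ \delta^2=-2,\ \text{or}\ \delta^2=-10\text{ and }(\delta,L_2)=2\mathbb{Z}\}$. *)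

(* Defs.v *)
(* Lattices are Z^n ('rV[int]_n) with an explicit integral
   Gram matrix. *)
From HB Require Import structures.
From mathcomp Require Import all_boot all_order all_algebra.
Set Implicit Arguments. Unset Strict Implicit. Unset Printing Implicit Defensive.
Import Order.TTheory GRing.Theory Num.Theory.
Local Open Scope ring_scope.

(* adjacency of the E8 Dynkin diagram, nodes 0..7 (Bourbaki 1..8 shifted):
   edges 1-3, 3-4, 4-5, 5-6, 6-7, 7-8, 2-4 *)
Definition e8_edge (a b : nat) : bool :=
  [|| (a == 0) && (b == 2), (a == 2) && (b == 3), (a == 3) && (b == 4),
      (a == 4) && (b == 5), (a == 5) && (b == 6), (a == 6) && (b == 7)
    | (a == 1) && (b == 3)]%N.

(* the negative definite E8 Gram matrix entry (minus the Cartan matrix) *)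
Definition e8_neg (a b : nat) : int :=
  if (a == b)%N then -2 else if e8_edge a b || e8_edge b a then 1 else 0.

(* Gram entries of L_K3 = U^3 (+) E8(-1)^2, coordinates 0..21:
   0..5 three hyperbolic planes, 6..13 first E8, 14..21 second E8 *)
Definition gramK3_nat (i j : nat) : int :=
  if ((i < 6) && (j < 6))%N then (if ((i./2 == j./2) && (i != j))%N then 1 else 0)
  else if [&& 6 <= i, i < 14, 6 <= j & j < 14]%N then e8_neg (i - 6)%N (j - 6)%N
  else if [&& 14 <= i, i < 22, 14 <= j & j < 22]%N then e8_neg (i - 14)%N (j - 14)%N
  else 0.

(* Gram entries of L_2 = L_K3 (+) Z e, e = coordinate 22, e^2 = -2 *)
Definition gramL2_nat (i j : nat) : int :=
  if ((i == 22) && (j == 22))%N then -2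
  else if ((i < 22) && (j < 22))%N then gramK3_nat i j else 0.

Definition QK3 : 'M[int]_22 := \matrix_(i, j) gramK3_nat i j.
Definition QL2 : 'M[int]_23 := \matrix_(i, j) gramL2_nat i j.

Definition bform {R : comRingType} {n : nat} (Q : 'M[R]_n) (x y : 'rV[R]_n) : R :=
  (x *m Q *m y^T) 0 0.

Definition intQ {m n : nat} (A : 'M[int]_(m, n)) : 'M[rat]_(m, n) :=
  map_mx (fun z : int => z%:~R) A.

(* A sublattice M of Z^n given by a basis: the rows of B : 'M_(r, n),
   assumed linearly independent (row_free over Q). *)
Definition in_lat {r n : nat} (B : 'M[int]_(r, n)) (x : 'rV[int]_n) : Prop :=
  exists c : 'rV[int]_r, x = c *m B.

(* primitive: L/M torsion free *)
Definition primitive_sub {r n : nat} (B : 'M[int]_(r, n)) : Prop :=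
  forall (x : 'rV[int]_n) (k : nat), (0 < k)%N -> in_lat B (x *+ k) -> in_lat B x.

Definition sub_gram {r n : nat} (Q : 'M[int]_n) (B : 'M[int]_(r, n)) : 'M[int]_r :=
  B *m Q *m B^T.

(* hyperbolic: the restricted form has signature (1, rank - 1)
   (nondegenerate, exactly one positive square), by Sylvester diagonalisation *)
Definition hyperbolic_sub {r n : nat} (Q : 'M[int]_n) (B : 'M[int]_(r.+1, n)) : Prop :=
  exists (P : 'M[rat]_r.+1) (d : 'rV[rat]_r.+1),
    P \in unitmx /\ P *m intQ (sub_gram Q B) *m P^T = diag_mx d /\
    0 < d 0 ord0 /\ (forall i : 'I_r.+1, i != ord0 -> d 0 i < 0).

(* dual lattice M^* inside M (x) Q, elements given as vectors of Q^n *)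
Definition in_dual {r n : nat} (Q : 'M[int]_n) (B : 'M[int]_(r, n)) (v : 'rV[rat]_n) : Prop :=
  (exists c : 'rV[rat]_r, v = c *m intQ B) /\
  (forall m : 'rV[int]_n, in_lat B m ->
     exists z : int, bform (intQ Q) v (intQ m) = z%:~R).

(* 2-elementary: the discriminant group M^*/M is killed by 2, i.e. is
   isomorphic to (Z/2)^a for some a *)
Definition two_elementary_sub {r n : nat} (Q : 'M[int]_n) (B : 'M[int]_(r, n)) : Prop :=
  forall v : 'rV[rat]_n, in_dual Q B v ->
    exists m : 'rV[int]_n, in_lat B m /\ v *+ 2 = intQ m.

Definition orth {n : nat} (Q : 'M[int]_n) (S : 'rV[int]_n -> Prop) (x : 'rV[int]_n) : Prop :=
  forall y, S y -> bform Q x y = 0.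

Definition DeltaK3 (S : 'rV[int]_22 -> Prop) (d : 'rV[int]_22) : Prop :=
  S d /\ bform QK3 d d = -2.

Definition div_L2_2 (d : 'rV[int]_23) : Prop :=
  forall k : int, (exists y : 'rV[int]_23, bform QL2 d y = k) <-> (2 %| k)%Z.

Definition DeltaL2 (S : 'rV[int]_23 -> Prop) (d : 'rV[int]_23) : Prop :=
  S d /\ (bform QL2 d d = -2 \/ (bform QL2 d d = -10 /\ div_L2_2 d)).

Definition incl (x : 'rV[int]_22) : 'rV[int]_23 :=
  \row_(j < 23) (if (j < 22)%N =P true is ReflectT h then x 0 (Ordinal h) else 0).

Definition e_vec : 'rV[int]_23 := \row_(j < 23) (if (j == 22 :> nat) then 1 else 0).

Definition tildeM {r : nat} (B : 'M[int]_(r, 22)) (y : 'rV[int]_23) : Prop :=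
  exists (m : 'rV[int]_22) (k : int), in_lat B m /\ y = incl m + e_vec *~ k.

(* Main.v *)
Require Import Defs.
From HB Require Import structures.
From mathcomp Require Import all_boot all_order all_algebra zify ring.
Import Order.TTheory GRing.Theory Num.Theory.
Local Open Scope ring_scope.

Lemma bform_sum n (Q : 'M[int]_n) x y :
  bform Q x y = \sum_(j < n) \sum_(i < n) x ord0 i * Q i j * y ord0 j.
Proof.
rewrite /bform mxE; apply: eq_bigr => j _; rewrite !mxE mulr_suml.
by apply: eq_bigr => i _.
Qed.

Lemma bformD n (Q : 'M[int]_n) x y z :
  bform Q x (y + z) = bform Q x y + bform Q x z.
Proof.
rewrite !bform_sum -big_split /=; apply: eq_bigr => j _.
rewrite -big_split /=; apply: eq_bigr => i _; rewrite mxE; ring.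
Qed.

Lemma mxMzE n (y : 'rV[int]_n) k j : (y *~ k) ord0 j = y ord0 j *~ k.
Proof. by case: k => m; rewrite ?NegzE /= ?mxE mulmxnE. Qed.

Lemma bformMz n (Q : 'M[int]_n) x y k :
  bform Q x (y *~ k) = bform Q x y * k.
Proof.
rewrite !bform_sum mulr_suml; apply: eq_bigr => j _.
rewrite mulr_suml; apply: eq_bigr => i _; rewrite mxMzE -mulrzr; ring.
Qed.

Lemma bform_delta n (Q : 'M[int]_n) x j :
  bform Q x (delta_mx 0 j) = \sum_(i < n) x ord0 i * Q i j.
Proof.
rewrite bform_sum (bigD1 j) //= [X in _ + X]big1 ?addr0.
  by apply: eq_bigr => i _; rewrite mxE eqxx /= mulr1.
move=> k hk; rewrite mxE (negbTE hk) andbF /=.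
by apply: big1 => i _; rewrite mulr0.
Qed.

Lemma incl_widen x (i : 'I_22) : incl x ord0 (widen_ord (leqnSn 22) i) = x ord0 i.
Proof.
rewrite mxE; case: (_ =P _) => [h|h]; last by case: h; exact: (ltn_ord i).
by congr (x _ _); apply: val_inj.
Qed.

Lemma incl_max x : incl x ord0 ord_max = 0.
Proof. by rewrite mxE; case: (_ =P _). Qed.

Lemma e_vecE : e_vec = delta_mx 0 ord_max.
Proof. apply/rowP => j; rewrite !mxE eqxx /=. have -> : (j == ord_max) = (j == 22 :> nat) by []. by case: ifP. Qed.

Lemma bform_incl x y : bform QL2 (incl x) (incl y) = bform QK3 x y.
Proof.
rewrite !bform_sum big_ord_recr /= incl_max.
rewrite [X in _ + X]big1 ?addr0; last by move=> i _; rewrite mulr0.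
apply: eq_bigr => j _; rewrite big_ord_recr /= incl_max !mul0r addr0.
apply: eq_bigr => i _; rewrite !incl_widen !mxE.
rewrite /gramL2_nat /=.
have hi := ltn_ord i; have hj := ltn_ord j.
rewrite hi hj /=. case: eqP => [h|//]. by move: hi; rewrite h.
Qed.

Lemma bform_e d : bform QL2 d e_vec = - 2 * d ord0 ord_max.
Proof.
rewrite e_vecE bform_delta big_ord_recr /= big1 ?add0r.
  by rewrite mxE /= mulrC.
move=> i _; rewrite mxE /gramL2_nat /= (ltn_eqF (ltn_ord i)) ltnn andbF /= mulr0 //.
Qed.
Ltac simp_sum h := rewrite /index_iota /= !big_cons big_nil /gramK3_nat /= /e8_neg /e8_edge /= !mulr0 !addr0 ?add0r ?mulr1 in h.

Lemma parity (f : nat -> int) :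
  (forall j, (j < 22)%N -> (2 %| \sum_(0 <= i < 22) f i * gramK3_nat i j)%Z) ->
  forall j, (j < 22)%N -> (2 %| f j)%Z.
Proof.
move=> H.
have h0 := H 0%N isT. simp_sum h0.
have h1 := H 1%N isT. simp_sum h1.
have h2 := H 2%N isT. simp_sum h2.
have h3 := H 3%N isT. simp_sum h3.
have h4 := H 4%N isT. simp_sum h4.
have h5 := H 5%N isT. simp_sum h5.
have h6 := H 6%N isT. simp_sum h6.
have h7 := H 7%N isT. simp_sum h7.
have h8 := H 8%N isT. simp_sum h8.
have h9 := H 9%N isT. simp_sum h9.
have h10 := H 10%N isT. simp_sum h10.
have h11 := H 11%N isT. simp_sum h11.
have h12 := H 12%N isT. simp_sum h12.
have h13 := H 13%N isT. simp_sum h13.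
have h14 := H 14%N isT. simp_sum h14.
have h15 := H 15%N isT. simp_sum h15.
have h16 := H 16%N isT. simp_sum h16.
have h17 := H 17%N isT. simp_sum h17.
have h18 := H 18%N isT. simp_sum h18.
have h19 := H 19%N isT. simp_sum h19.
have h20 := H 20%N isT. simp_sum h20.
have h21 := H 21%N isT. simp_sum h21.
clear H.
move=> j hj.
do 22 (case: j hj => [|j] hj; [lia|]). done.
Qed.

Lemma bform_scale2 (d : 'rV[int]_22) :
  bform QK3 (d *+ 2) (d *+ 2) = bform QK3 d d *+ 4.
Proof.
rewrite !bform_sum -sumrMnl; apply: eq_bigr => j _.
rewrite -sumrMnl; apply: eq_bigr => i _; rewrite !mulmxnE.
by rewrite mulrnAl mulrnAl mulrnAr -mulrnA.
Qed.

Lemma half (x : int) : (2 %| x)%Z -> x = (x %/ 2)%Z *+ 2.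
Proof. move=> h; have := divzK h; lia. Qed.

Lemma even_coords (d : 'rV[int]_22) :
  (forall j : 'I_22, (2 %| bform QK3 d (delta_mx ord0 j))%Z) ->
  exists d', d = d' *+ 2.
Proof.
move=> H.
have P := @parity (fun i => d ord0 (inord i)).
have E : forall i : 'I_22, (2 %| d ord0 i)%Z.
  move=> i; rewrite -[i in d _ i]inord_val; apply: (P _ i (ltn_ord i)).
  move=> j hj; have := H (Ordinal hj); rewrite bform_delta.
  rewrite big_mkord.
  suff -> : \sum_(i0 < 22) d ord0 i0 * QK3 i0 (Ordinal hj) =
            \sum_(i0 < 22) d ord0 (inord i0) * gramK3_nat i0 j by [].
  by apply: eq_bigr => k _; rewrite inord_val mxE.
exists (\row_i ((d ord0 i) %/ 2)%Z).
apply/rowP => i; rewrite mulmxnE mxE.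
exact: half (E i).
Qed.


Theorem lemma4p2 (r : nat) (B : 'M[int]_(r.+1, 22)) :
  row_free (intQ B) ->
  primitive_sub B ->
  hyperbolic_sub QK3 B ->
  two_elementary_sub QK3 B ->
  forall delta : 'rV[int]_23,
    DeltaL2 (orth QL2 (tildeM B)) delta <->
    exists d : 'rV[int]_22, DeltaK3 (orth QK3 (in_lat B)) d /\ delta = incl d.
Proof.
move=> _ _ _ _ delta; split.
- move=> [Hor Hn].
  have lat0 : in_lat B 0 by exists 0; rewrite mul0mx.
  have incl0 : incl 0 = 0.
    by apply/rowP => j; rewrite !mxE; case: (_ =P _) => // h; rewrite mxE.
  have h22 : delta ord0 ord_max = 0.
    have := Hor e_vec; rewrite bform_e.
    have H1 : tildeM B e_vec by exists 0, 1; split => //; rewrite incl0 add0r.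
    move=> /(_ H1) /eqP; rewrite mulf_eq0 => /orP[//|/eqP//].
  pose d := \row_(j < 22) delta ord0 (widen_ord (leqnSn 22) j).
  have Hd : delta = incl d.
    apply/rowP => j; rewrite [RHS]mxE; case: (_ =P _) => [h|h].
      by rewrite mxE; congr (delta _ _); apply: val_inj.
    have -> : j = ord_max.
      apply: val_inj => /=; have := ltn_ord j.
      have : ~~ (j < 22)%N by apply/negP.
      lia.
    exact: h22.
  exists d; split => //; split.
    move=> y hy; rewrite -bform_incl -Hd; apply: Hor; exists y, 0; split => //.
    by rewrite mulr0z addr0.
  rewrite -bform_incl -Hd. case: Hn => [//|[h10 hdiv]]. exfalso.
  have [d' hd'] : exists d', d = d' *+ 2.
    apply: even_coords => j.
    apply: (hdiv (bform QK3 d (delta_mx ord0 j))).1.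
    by exists (incl (delta_mx ord0 j)); rewrite Hd bform_incl.
  move: h10; rewrite Hd bform_incl hd' bform_scale2; lia.
- move=> [d [[Hor Hn] ->]]; split.
    move=> y [m [k [hm ->]]].
    by rewrite bformD bformMz bform_incl bform_e incl_max (Hor m hm) mulr0 mul0r add0r.
  by left; rewrite bform_incl.
Qed.
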